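(* For every $d\ge1$, $t>0$ and $\epsilon>0$, $r^*_{t,\epsilon,d}\ge r^*_{t,\epsilon,1}$.
   Context: Training points $y_k\boldsymbol e_1\in\mathbb R^d$, $k\in[n]$, $y_k=2(k-1)\Delta-D$, $\Delta=D/(n-1)$. $p_{\mathcal N}(x;\sigma)=(\sqrt{2\pi}\sigma)^{-1}e^{-x^2/(2\sigma^2)}$; $p^{(n,1)}_t(x)=\frac1n\sum_kp_{\mathcal N}(x-y_k;\sqrt t)$; $p^{(n,d)}_t(\boldsymbol x)=p^{(n,1)}_t(x_1)\prod_{i\ge2}p_{\mathcal N}(x_i;\sqrt t)$; $L^{(n,d)}_t[\boldsymbol f]=t\,\mathbb E_{p^{(n,d)}_t}\|\boldsymbol f-\nabla\log p^{(n,d)}_t\|^2$ for measurable $\boldsymbol f:\mathbb R^d\to\mathbb R^d$. Admissible $\boldsymbol f$: every line restriction $h_{\boldsymbol w,\boldsymbol b}(x)=\boldsymbol f(\boldsymbol wx+\boldsymbol b)$ ($\boldsymbol w\in\mathbb S^{d-1}$, $\boldsymbol b\in\mathbb R^d$) is continuous and twice differentiable outside a finite set $N_{\boldsymbol w,\boldsymbol b}$; $R^{(d)}[\boldsymbol f]=\sup_{\boldsymbol w,\boldsymbol b}\sup\{\sum_i\|h'_{\boldsymbol w,\boldsymbol b}(x_{i+1})-h'_{\boldsymbol w,\boldsymbol b}(x_i)\|:x_1<\dots<x_m\in\mathbb R\setminus N_{\boldsymbol w,\boldsymbol b}\}$. $r^*_{t,\epsilon,d}=\inf\{R^{(d)}[\boldsymbol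 f]:\boldsymbol f\text{ admissible},\ L^{(n,d)}_t[\boldsymbol f]<\epsilon\}$. *)

(* Defs.v *)
From HB Require Import structures.
From mathcomp Require Import all_boot all_order all_algebra.
From mathcomp Require Import all_classical all_reals all_analysis.
Set Implicit Arguments. Unset Strict Implicit. Unset Printing Implicit Defensive.
Import Order.TTheory GRing.Theory Num.Theory.
Import numFieldNormedType.Exports.
Local Open Scope classical_set_scope.
Local Open Scope ring_scope.

Section Defs.
Variable R : realType.

Definition enorm (d : nat) (v : 'rV[R]_d) : R := Num.sqrt (\sum_(i < d) (v 0 i) ^+ 2).

Definition pN (x sigma : R) : R :=
  (Num.sqrt (2 * pi) * sigma)^-1 * expR (- (x ^+ 2) / (2 * sigma ^+ 2)).

(* training points y_k = 2(k-1)Delta - D, k = 1..n ; here k : 'I_n is 0-based *)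
Definition ypt (n : nat) (D : R) (k : nat) : R :=
  2 * k%:R * (D / (n.-1)%:R) - D.

Definition p1 (n : nat) (D t x : R) : R :=
  (n%:R)^-1 * \sum_(k < n) pN (x - ypt n D k) (Num.sqrt t).

Definition pnd (n : nat) (D t : R) (d : nat) (x : 'rV[R]_d) : R :=
  \prod_(i < d) (if (i == 0 :> nat) then p1 n D t (x 0 i) else pN (x 0 i) (Num.sqrt t)).

Definition grad_log_p (n : nat) (D t : R) (d : nat) (x : 'rV[R]_d) : 'rV[R]_d :=
  \row_(i < d) derive (fun z : 'rV[R]_d => ln (pnd n D t z)) x (delta_mx 0 i).

Fixpoint iint (k : nat) (G : (nat -> R) -> \bar R) : \bar R :=
  match k with
  | 0 => G (fun _ => 0)
  | k'.+1 => (\int[@lebesgue_measure R]_x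
                 iint k' (fun g => G (fun j => if j == k' then x else g j)))%E
  end.

(* integral over R^d w.r.t. Lebesgue measure (as an iterated integral) *)
Definition int_Rd (d : nat) (F : 'rV[R]_d -> \bar R) : \bar R :=
  iint d (fun g => F (\row_(i < d) g (i : nat))).

Definition borel_meas (d : nat) (f : 'rV[R]_d -> 'rV[R]_d) : Prop :=
  forall U : set 'rV[R]_d, open U -> <<s open >> (f @^-1` U).

Definition Lloss (n : nat) (D t : R) (d : nat) (f : 'rV[R]_d -> 'rV[R]_d) : \bar R :=
  (t%:E * int_Rd (fun x => (pnd n D t x * (enorm (f x - grad_log_p n D t x)) ^+ 2)%:E))%E.

Definition hline (d : nat) (f : 'rV[R]_d -> 'rV[R]_d) (w b : 'rV[R]_d) : R -> 'rV[R]_d :=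
  fun x => f (x *: w + b).

Definition twice_diff (d : nat) (h : R -> 'rV[R]_d) (x : R) : Prop :=
  (\forall y \near x, derivable h y 1) /\ derivable (derive1 h) x 1.

Definition admissible (d : nat) (f : 'rV[R]_d -> 'rV[R]_d) : Prop :=
  forall w b : 'rV[R]_d, enorm w = 1 ->
    continuous (hline f w b) /\
    finite_set [set x | ~ twice_diff (hline f w b) x].

Definition var_deriv (d : nat) (h : R -> 'rV[R]_d) : \bar R :=
  ereal_sup [set (\sum_(i < (size s).-1)
                    enorm (derive1 h (nth 0 s i.+1) - derive1 h (nth 0 s i)))%:E
            | s in [set s : seq R | sorted <%R s /\ (forall x, x \in s -> twice_diff h x)]].

Definition Rreg (d : nat) (f : 'rV[R]_d -> 'rV[R]_d) : \bar R :=
  ereal_sup [set var_deriv (hline f wb.1 wb.2)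
            | wb in [set wb : 'rV[R]_d * 'rV[R]_d | enorm wb.1 = 1]].

Definition rstar (n : nat) (D t eps : R) (d : nat) : \bar R :=
  ereal_inf [set Rreg f | f in [set f : 'rV[R]_d -> 'rV[R]_d |
       admissible f /\ borel_meas f /\ (Lloss n D t f < eps%:E)%E]].

End Defs.

(* Main.v *)
Require Import Defs.
From HB Require Import structures.
From mathcomp Require Import all_boot all_order all_algebra.
From mathcomp Require Import all_classical all_reals all_analysis.
From mathcomp Require Import ring lra zify measurable_realfun.
Import Order.TTheory GRing.Theory Num.Theory.
Import numFieldNormedType.Exports.
Local Open Scope classical_set_scope.
Local Open Scope ring_scope.

Section Aux.
Context {R : realType}.
Local Notation mu := (@lebesgue_measure R).

Lemma int_le (f g : R -> \bar R) : (forall x, (0 <= f x)%E) -> (forall x, (f x <= g x)%E) ->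
  (\int[mu]_x f x <= \int[mu]_x g x)%E.
Proof.
move=> f0 fg; have g0 x : (0 <= g x)%E by exact: le_trans (f0 x) (fg x).
rewrite !ge0_integralTE //; apply: le_ereal_sup => _ [h hf <-]; exists h => //.
by move=> x; exact: le_trans (hf x) (fg x).
Qed.

Lemma int_scale (c : R) (f : R -> \bar R) : 0 < c -> (forall x, (0 <= f x)%E) ->
  (c%:E * \int[mu]_x f x <= \int[mu]_x (c%:E * f x))%E.
Proof.
move=> c0 f0; have cf0 x : (0 <= c%:E * f x)%E by rewrite mule_ge0 // lee_fin ltW.
rewrite !ge0_integralTE // -ereal_sup_pZl //.
apply: le_ereal_sup => _ [_ [h hf <-] <-]; exists (scale_nnsfun h (ltW c0)).
  by move=> x /=; rewrite EFinM lee_pmul2l ?lte_fin //.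
by rewrite -sintegralrM.
Qed.

Lemma pN_normal (x s : R) : 0 < s -> pN x s = normal_pdf 0 s x.
Proof.
move=> s0; rewrite /pN /normal_pdf gt_eqF // /normal_peak /normal_fun subr0.
congr (_ * expR _); last by congr (- _ / _); ring.
congr (_^-1).
have -> : s ^+ 2 * pi *+ 2 = s ^+ 2 * (2 * pi) by ring.
by rewrite [RHS]sqrtrM ?sqr_ge0 // sqrtr_sqr gtr0_norm // mulrC.
Qed.

Lemma pN_gt0 (x s : R) : 0 < s -> 0 < pN x s.
Proof.
move=> s0; rewrite /pN mulr_gt0 ?expR_gt0 // invr_gt0 mulr_gt0 // sqrtr_gt0.
by rewrite mulr_gt0 // pi_gt0.
Qed.

Lemma int_cpN (c s : R) : 0 <= c -> 0 < s -> (\int[mu]_y (c * pN y s)%:E = c%:E)%E.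
Proof.
move=> c0 s0.
under eq_integral do rewrite EFinM pN_normal //.
rewrite ge0_integralZl_EFin //; last first.
  by apply/measurable_EFinP; exact: measurable_normal_pdf.
  by move=> x _; rewrite lee_fin normal_pdf_ge0.
by rewrite integral_normal_pdf mule1.
Qed.


Definition upd (k : nat) (x : R) (g : nat -> R) : nat -> R :=
  fun j => if j == k then x else g j.

Fixpoint iintS (k m : nat) (G : (nat -> R) -> \bar R) : \bar R :=
  match k with
  | 0 => G (fun _ => 0)
  | k'.+1 => (\int[mu]_x iintS k' m (fun g => G (upd (k' + m) x g)))%E
  end.

Lemma iint_S k G : iint k G = iintS k 0 G.
Proof.
elim: k G => [//|k IH] G /=; apply: eq_integral => x _.
by rewrite IH addn0.
Qed.

Lemma upd_comm a b x y g : a != b -> upd a x (upd b y g) = upd b y (upd a x g).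
Proof.
move=> ab; apply/funext => j; rewrite /upd.
case: (eqVneq j a) => [->|ja]; last by [].
by rewrite (negbTE ab).
Qed.

Lemma iintS_split k m G :
  iintS k.+1 m G = iintS k m.+1 (fun z => \int[mu]_x G (upd m x z))%E.
Proof.
elim: k m G => [|k IH] m G; first by rewrite /= add0n.
transitivity (\int[mu]_y iintS k.+1 m (fun g => G (upd (k.+1 + m) y g)))%E; first by [].
under eq_integral do rewrite IH.
rewrite [RHS]/=; apply: eq_integral => y _; congr iintS; apply/funext => z.
apply: eq_integral => x _; rewrite upd_comm ?addnS ?addSn //.
by rewrite -addnS gtn_eqF // ltn_addl.
Qed.

Lemma iintS_ge0 k m G : (forall g, (0 <= G g)%E) -> (0 <= iintS k m G)%E.
Proof.
elim: k m G => [|k IH] m G G0 //=; apply: integral_ge0 => x _; exact: IH.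
Qed.

Lemma iintS_le k m G H : (forall g, (0 <= G g)%E) -> (forall g, (G g <= H g)%E) ->
  (iintS k m G <= iintS k m H)%E.
Proof.
elim: k m G H => [|k IH] m G H G0 GH //=.
apply: int_le => [x|x]; first exact: iintS_ge0.
exact: IH.
Qed.

Lemma iintS_gauss k m (c s : R) : 0 <= c -> 0 < s ->
  iintS k m (fun z => (c * \prod_(i < k) pN (z (m + i)%N) s)%:E) = c%:E.
Proof.
elim: k c => [|k IH] c c0 s0; first by rewrite /= big_ord0 mulr1.
rewrite /=; transitivity (\int[mu]_y ((c * pN y s)%:E))%E; last exact: int_cpN.
apply: eq_integral => y _.
have cp : 0 <= c * pN y s by rewrite mulr_ge0 // ltW // pN_gt0.
rewrite -(IH _ cp s0); congr iintS; apply/funext => g; congr (_%:E).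
rewrite big_ord_recr /=.
have -> : upd (k + m) y g (m + k) = y by rewrite /upd addnC eqxx.
have -> : \prod_(i < k) pN (upd (k + m) y g (m + widen_ord (leqnSn k) i)) s =
          \prod_(i < k) pN (g (m + i)%N) s.
  apply: eq_bigr => i _ /=; rewrite /upd [(k + m)%N]addnC eqn_add2l.
  by rewrite (ltn_eqF (ltn_ord i)).
by ring.
Qed.

Definition emb (d' : nat) (z : nat -> R) (x : R) : 'rV[R]_d'.+1 :=
  \row_(i < d'.+1) upd 0 x z i.

Definition Wz (d' : nat) (t : R) (z : nat -> R) : R :=
  \prod_(i < d') pN (z (1 + i)%N) (Num.sqrt t).

Lemma Wz_gt0 d' (t : R) z : 0 < t -> 0 < Wz d' t z.
Proof.
move=> t0; rewrite /Wz; elim/big_ind: _ => //; first exact: mulr_gt0.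
by move=> i _; apply: pN_gt0; rewrite sqrtr_gt0.
Qed.

Lemma p1_gt0 n (D t x : R) : (0 < n)%N -> 0 < t -> 0 < p1 n D t x.
Proof.
case: n => // n _ t0; rewrite /p1 mulr_gt0 // ?invr_gt0 ?ltr0n //.
rewrite big_ord_recl ltr_wpDr ?sumr_ge0 // => [i _|]; rewrite ?ltW // pN_gt0 //;
  by rewrite sqrtr_gt0.
Qed.

Lemma pnd_emb n (D t : R) d' z x :
  pnd n D t (emb d' z x) = p1 n D t x * Wz d' t z.
Proof.
rewrite /pnd big_ord_recl /= !mxE /upd eqxx; congr (_ * _).
by apply: eq_bigr => i _; rewrite !mxE /= /upd /= add1n.
Qed.

Lemma emb_shift d' z (x h : R) :
  h *: delta_mx 0 0 + emb d' z x = emb d' z (h + x).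
Proof.
apply/matrixP => i j; rewrite !mxE /upd (ord1 i) /=.
case: j => [[|j'] hj] /=; first by rewrite mulr1.
by rewrite mulr0 add0r.
Qed.

Definition Lsc n (D t : R) (x : R) : R :=
  lim ((fun h : R => h^-1 *: (ln (p1 n D t (h + x)) - ln (p1 n D t x))) @ 0^').

Lemma glp_emb n (D t : R) d' z x : (0 < n)%N -> 0 < t ->
  grad_log_p n D t (emb d' z x) 0 0 = Lsc n D t x.
Proof.
move=> n0 t0; rewrite /grad_log_p mxE /derive /Lsc; congr (lim _).
f_equal; apply/funext => h /=.
rewrite (_ : pnd n D t _ = p1 n D t (h + x) * Wz d' t z); last first.
  by rewrite -pnd_emb; congr pnd; exact: emb_shift.
have hp y : p1 n D t y \is Num.pos by rewrite posrE p1_gt0.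
have hw : Wz d' t z \is Num.pos by rewrite posrE Wz_gt0.
rewrite pnd_emb (lnM (hp (h + x)) hw) (lnM (hp x) hw).
by congr (_ *: _); ring.
Qed.

Lemma enorm_sq d (v : 'rV[R]_d) : enorm v ^+ 2 = \sum_(i < d) (v 0 i) ^+ 2.
Proof. by rewrite /enorm sqr_sqrtr // sumr_ge0 // => i _; rewrite sqr_ge0. Qed.

Lemma enorm_ge d' (v : 'rV[R]_d'.+1) : (v 0 0) ^+ 2 <= enorm v ^+ 2.
Proof.
rewrite enorm_sq big_ord_recl lerDl sumr_ge0 // => i _; exact: sqr_ge0.
Qed.

Lemma enorm1 (v : 'rV[R]_1) : enorm v = `|v 0 0|.
Proof. by rewrite /enorm big_ord1 sqrtr_sqr. Qed.

Definition Pj {d' : nat} (v : 'rV[R]_d'.+1) : 'rV[R]_1 := (v 0 0) *: const_mx 1.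

Definition gz {d'} (f : 'rV[R]_d'.+1 -> 'rV[R]_d'.+1) (z : nat -> R) (y : 'rV[R]_1) :
  'rV[R]_1 := Pj (f (emb d' z (y 0 0))).

Lemma Pj00 d' (v : 'rV[R]_d'.+1) : Pj v 0 0 = v 0 0.
Proof. by rewrite /Pj !mxE mulr1. Qed.

Definition I1 n (D t : R) {d'} (f : 'rV[R]_d'.+1 -> 'rV[R]_d'.+1) (z : nat -> R) :=
  (\int[mu]_x (p1 n D t x * ((f (emb d' z x)) 0 0 - Lsc n D t x) ^+ 2)%:E)%E.

Lemma Lloss_gz n (D t : R) (d' : nat) (f : 'rV[R]_d'.+1 -> 'rV[R]_d'.+1) z : (0 < n)%N -> 0 < t ->
  Lloss n D t (gz f z) = (t%:E * I1 n D t f z)%E.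
Proof.
move=> n0 t0; rewrite /Lloss /int_Rd /I1 /=; congr (_ * _)%E.
apply: eq_integral => x _; congr (_%:E).
rewrite (pnd_emb n D t 0 (fun _ => 0) x) /Wz big_ord0 mulr1 enorm1.
rewrite [X in `|X|]mxE [X in `|_ + X|]mxE (glp_emb n D t 0 (fun _ => 0) x) //.
rewrite /gz Pj00 mxE /upd eqxx.
by rewrite real_normK // num_real.
Qed.

Lemma loss_main n (D t eps : R) d' (f : 'rV[R]_d'.+1 -> 'rV[R]_d'.+1) :
  (0 < n)%N -> 0 < t -> 0 < eps ->
  (forall z, ~ (Lloss n D t (gz f z) < eps%:E)%E) -> (eps%:E <= Lloss n D t f)%E.
Proof.
move=> n0 t0 e0 H.
set c := eps / t.
have c0 : 0 <= c by rewrite divr_ge0 // ltW.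
have tc : eps%:E = (t%:E * c%:E)%E by rewrite -EFinM /c mulrC divfK // gt_eqF.
have hI z : (c%:E <= I1 n D t f z)%E.
  rewrite leNgt; apply/negP => hlt; apply: (H z).
  by rewrite Lloss_gz // tc lte_pmul2l // lte_fin.
rewrite /Lloss /int_Rd iint_S iintS_split tc.
rewrite lee_pmul2l ?lte_fin //.
rewrite -(@iintS_gauss d' 1 c (Num.sqrt t)) ?sqrtr_gt0 //.
apply: iintS_le => z.
  by rewrite lee_fin mulr_ge0 // prodr_ge0 // => i _; rewrite ltW // pN_gt0 // sqrtr_gt0.
have W0 := @Wz_gt0 d' t z t0.
apply: (@le_trans _ _ ((Wz d' t z)%:E * I1 n D t f z)%E).
  by rewrite mulrC EFinM lee_pmul2l ?lte_fin.
apply: le_trans; first apply: int_scale => // x; first by rewrite lee_fin mulr_ge0 ?sqr_ge0 // ltW // p1_gt0.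
apply: int_le => x.
  rewrite -EFinM lee_fin; apply: mulr_ge0; [exact: ltW|apply: mulr_ge0; [exact/ltW/p1_gt0|exact: sqr_ge0]].
rewrite -EFinM lee_fin.
change (Wz d' t z * (p1 n D t x * ((f (emb d' z x)) 0 0 - Lsc n D t x) ^+ 2) <=
  pnd n D t (emb d' z x) * enorm (f (emb d' z x) - grad_log_p n D t (emb d' z x)) ^+ 2).
rewrite pnd_emb mulrA [Wz d' t z * _]mulrC.
apply: ler_wpM2l; first by apply: mulr_ge0; [exact/ltW/p1_gt0|exact: ltW].
have E : (f (emb d' z x) - grad_log_p n D t (emb d' z x)) 0 0 =
  f (emb d' z x) 0 0 - Lsc n D t x by rewrite [LHS]mxE [X in _ + X]mxE glp_emb.
by rewrite -E enorm_ge.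
Qed.

Lemma Pj_cont d' : continuous (@Pj d').
Proof.
move=> v; apply: (@continuous_comp _ _ _ (fun M : 'rV[R]_d'.+1 => M 0 0)
  (fun c : R => c *: (const_mx 1 : 'rV[R]_1))).
  exact: coord_continuous.
exact: scalel_continuous.
Qed.

Lemma Pj_lin d' (k : R) (u v : 'rV[R]_d'.+1) : Pj (k *: (u - v)) = k *: (Pj u - Pj v).
Proof. by rewrite /Pj !mxE -scalerA scalerBl. Qed.

Lemma D1 {d'} {h : R -> 'rV[R]_d'.+1} {x : R} : derivable h x 1 ->
  derivable (Pj \o h) x 1 /\ derive (Pj \o h) x 1 = Pj (derive h x 1).
Proof.
move=> dh.
have hc := continuous_cvg _ (@Pj_cont d' (derive h x 1)) dh.
have E : (fun t : R => t^-1 *: (((Pj \o h) \o shift x) (t *: 1) - (Pj \o h) x)) =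
  Pj \o (fun t : R => t^-1 *: ((h \o shift x) (t *: 1) - h x)).
  by apply/funext => t /=; rewrite Pj_lin.
split; first by rewrite /derivable E; apply/cvg_ex; eexists; exact: hc.
by rewrite [LHS]/derive E; apply: cvg_lim => //; exact: hc.
Qed.

Lemma td_Pj d' (h : R -> 'rV[R]_d'.+1) x : twice_diff h x -> twice_diff (Pj \o h) x.
Proof.
move=> [nh dh']; split.
  by move: nh; apply: filterS => y /D1 [].
have ne : {near x, Pj \o derive1 h =1 derive1 (Pj \o h)}.
  by move: nh; apply: filterS => y /D1 [_ e]; rewrite /= !derive1E e.
apply: near_eq_derivable ne _; exact: (D1 dh').1.
Qed.

Lemma hline_gz d' (f : 'rV[R]_d'.+1 -> 'rV[R]_d'.+1) z (w b : 'rV[R]_1) :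
  hline (gz f z) w b = Pj \o hline f ((w 0 0) *: delta_mx 0 0) (emb d' z (b 0 0)).
Proof.
apply/funext => x; rewrite /hline /gz /= scalerA emb_shift.
by rewrite [(x *: w + b) 0 0]mxE [(x *: w) 0 0]mxE.
Qed.

Lemma enorm_delta d' (c : R) : enorm ((c *: delta_mx 0 0 : 'rV[R]_d'.+1)) = `|c|.
Proof.
rewrite /enorm big_ord_recl big1 ?addr0 => [|i _]; last by rewrite !mxE /= mulr0 expr0n.
by rewrite !mxE /= mulr1 sqrtr_sqr.
Qed.

Lemma adm_gz d' (f : 'rV[R]_d'.+1 -> 'rV[R]_d'.+1) z : admissible f -> admissible (gz f z).
Proof.
move=> af w b w1; rewrite hline_gz.
have [] := af ((w 0 0) *: delta_mx 0 0) (emb d' z (b 0 0)).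
  by rewrite enorm_delta -enorm1.
move=> cf ff; split.
  by move=> x; apply: continuous_comp; [exact: cf|exact: Pj_cont].
apply: sub_finite_set ff => x /= ntd td; apply: ntd; exact: td_Pj.
Qed.

Lemma sig_pre (X Y : topologicalType) (phi : X -> Y) : continuous phi ->
  forall A, <<s open >> A -> <<s open >> (phi @^-1` A).
Proof.
move=> cphi.
suff H : <<s open >> `<=` [set A | <<s open >> (phi @^-1` A)] by move=> A /H.
have [h0 hC hU] := @smallest_sigma_algebra X setT open.
apply: smallest_sub.
  split => /=.
  - by rewrite preimage_set0.
  - move=> A hA; rewrite (_ : _ @^-1` _ = setT `\` phi @^-1` A); first exact: hC.
    by apply/seteqP; split => x /=.
  - by move=> F hF; rewrite preimage_bigcup; exact: hU.
move=> U oU; apply: sub_sigma_algebra; apply: open_comp oU => x _; exact: cphi.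
Qed.

Lemma borel_gz d' (f : 'rV[R]_d'.+1 -> 'rV[R]_d'.+1) z : borel_meas f -> borel_meas (gz f z).
Proof.
move=> bf U oU.
have -> : gz f z @^-1` U =
  (fun y : 'rV[R]_1 => emb d' z (y 0 0)) @^-1` (f @^-1` (Pj @^-1` U)) by [].
apply: sig_pre; last first.
  by apply: bf; apply: open_comp oU => x _; exact: Pj_cont.
have -> : (fun y : 'rV[R]_1 => emb d' z (y 0 0)) =
  (fun y : 'rV[R]_1 => (y 0 0) *: delta_mx 0 0 + emb d' z 0).
  by apply/funext => y; rewrite emb_shift addr0.
move=> y; apply: (@continuous_comp _ _ _ (fun M : 'rV[R]_1 => M 0 0)
  (fun c : R => c *: (delta_mx 0 0 : 'rV[R]_d'.+1) + emb d' z 0)).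
  exact: coord_continuous.
apply: cvgD; [exact: scalel_continuous|exact: cvg_cst].
Qed.

Lemma avoid {B : set R} {a : R} (b : R) : finite_set B -> a < b ->
  exists y, [/\ a < y, y < b & ~ B y].
Proof.
move=> fB ab; apply: contrapT => H.
set f := fun k : nat => a + (b - a) / k.+2%:R.
have ba : 0 < b - a by rewrite subr_gt0.
have hf k : B (f k).
  apply: contrapT => nB; apply: H; exists (f k); split => //.
    by rewrite /f ltrDl divr_gt0.
  rewrite /f -ltrBrDl ltr_pdivrMr // ltr_pMr // ltr1n.
  by [].
have fi : {in f @^-1` B &, injective f}.
  move=> m k _ _ /addrI /(mulfI (lt0r_neq0 ba)) /invr_inj /eqP.
  by rewrite eqr_nat => /eqP [].
have := finite_preimage fi fB.
rewrite (_ : f @^-1` B = setT); first exact: infinite_nat.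
by apply/seteqP; split => // k _; exact: hf.
Qed.

Lemma perturb (phi : R -> R) (B : set R) (e : R) (s : seq R) :
  finite_set B -> 0 < e -> sorted <%R s ->
  (forall x, x \in s -> {for x, continuous phi}) ->
  exists s' : seq R, [/\ size s' = size s, sorted <%R s',
    (forall y, y \in s' -> ~ B y),
    (forall i, (i < size s)%N -> `|phi (nth 0 s' i) - phi (nth 0 s i)| < e) &
    (forall i, (i < size s)%N -> nth 0 s i < nth 0 s' i)].
Proof.
move=> fB e0; elim: s => [|x s IH] ss cs; first by exists [::]; split.
have ss' : sorted <%R s := path_sorted ss.
have cs' : forall y, y \in s -> {for y, continuous phi}.
  by move=> y ys; apply: cs; rewrite inE ys orbT.
have [s0 [sz0 so0 nb0 cl0 gt0]] := IH ss' cs'.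
have [u xu hu] : exists2 u, x < u & (forall y0 s1, s = y0 :: s1 -> u = y0).
  case E: s => [|y0 s1].
    by exists (x + 1) => //; rewrite ltrDl ltr01.
  by exists y0 => [|? ? [->]] //; move: ss; rewrite E /= => /andP [].
have [r r0 Hr] : exists2 r, 0 < r & forall y, `|x - y| < r -> `|phi x - phi y| < e.
  move: (cs x (mem_head x s)) => /cvgrPdist_lt /(_ e e0).
  by move/nbhs_normP => [r r0 Hr]; exists r => // y hy; exact: Hr.
have xm : x < Num.min u (x + r) by rewrite lt_min xu ltrDl r0.
have [y [xy ymin nBy]] := avoid _ fB xm.
move: ymin; rewrite lt_min => /andP [yu yr].
exists (y :: s0); split.
- by rewrite /= sz0.
- case: s0 sz0 so0 nb0 cl0 gt0 => [|y0 s1] sz0 so0 nb0 cl0 gt0 //=.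
  apply/andP; split; last exact: so0.
  case E: s sz0 gt0 => [//|x1 s2] sz0 gt0.
  rewrite (hu _ _ E) in yu.
  by apply: lt_trans yu _; exact: (gt0 0%N).
- by move=> z; rewrite inE => /orP [/eqP ->|/nb0].
- case=> [_ /=|i]; last by rewrite /= ltnS; exact: cl0.
  rewrite distrC; apply: Hr.
  by rewrite distrC gtr0_norm ?subr_gt0 // ltrBlDl.
- case=> [_ //|i]; rewrite /= ltnS; exact: gt0.
Qed.

Lemma enorm_abs {d'} (v : 'rV[R]_d'.+1) : `|v 0 0| <= enorm v.
Proof.
rewrite -sqrtr_sqr /enorm ler_sqrt; last by rewrite sumr_ge0 // => i _; exact: sqr_ge0.
by rewrite big_ord_recl lerDl sumr_ge0 // => i _; exact: sqr_ge0.
Qed.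

Lemma tri4 (a1 a0 b1 b0 E ep : R) : `|b1 - b0| <= E -> `|b0 - a0| < ep ->
  `|b1 - a1| < ep -> `|a1 - a0| <= E + ep *+ 2.
Proof.
move=> h3 h1 h2.
have t1 := ler_distD b1 a1 a0.
have t2 := ler_distD b0 b1 a0.
have t3 : `|a1 - b1| = `|b1 - a1| by rewrite distrC.
apply: le_trans t1 _; rewrite t3 mulr2n addrCA.
apply: lerD; first exact: ltW.
by apply: le_trans t2 _; apply: lerD => //; exact: ltW.
Qed.

Lemma var_Pj d' (hf : R -> 'rV[R]_d'.+1) :
  finite_set [set x | ~ twice_diff hf x] -> (var_deriv (Pj \o hf) <= var_deriv hf)%E.
Proof.
move=> fB; apply: ge_ereal_sup => _ [s [ss tds] <-].
set phi := fun y => (derive1 (Pj \o hf) y) 0 0.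
have cphi : forall x, x \in s -> {for x, continuous phi}.
  move=> x /tds [_ dx].
  apply: (@continuous_comp _ _ _ (derive1 (Pj \o hf)) (fun M : 'rV[R]_1 => M 0 0)).
    by apply: differentiable_continuous; exact/derivable1_diffP.
  exact: coord_continuous.
rewrite (_ : \sum_(i < _) _ = \sum_(i < (size s).-1) `|phi (nth 0 s i.+1) - phi (nth 0 s i)|);
  last by apply: eq_bigr => i _; rewrite enorm1 [X in `|X|]mxE [X in `|_ + X|]mxE.
apply/lee_addgt0Pr => e e0.
set m := size s.
set ep := e / (2 * m%:R + 1).
have m0 : 0 < 2 * m%:R + 1 :> R by rewrite ltr_wpDl // mulr_ge0.
have ep0 : 0 < ep by rewrite divr_gt0.
have [s' [sz so nb cl gt]] := @perturb phi _ ep s fB ep0 ss cphi.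
have td y : y \in s' -> twice_diff hf y.
  by move=> ys; case: (pselect (twice_diff hf y)) => // ntd; exfalso; exact: (nb y ys).
have good y : y \in s' -> phi y = (derive1 hf y) 0 0.
  move=> /td [nh _]; have dh := nbhs_singleton nh.
  by rewrite /phi !derive1E (D1 dh).2 Pj00.
set S' := \sum_(i < (size s').-1) enorm (derive1 hf (nth 0 s' i.+1) - derive1 hf (nth 0 s' i)).
have H1 : (S'%:E <= var_deriv hf)%E.
  by apply: ereal_sup_ubound; exists s' => //; split.
apply: (@le_trans _ _ (S'%:E + e%:E)%E); last by rewrite leeD2r.
rewrite -EFinD lee_fin.
apply: (@le_trans _ _ (\sum_(i < m.-1) (enorm (derive1 hf (nth 0 s' i.+1) - derive1 hf (nth 0 s' i)) + ep *+ 2))).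
  apply: ler_sum => i _.
  have i1 : (i.+1 < m)%N by have := ltn_ord i; lia.
  have i0 : (i < m)%N by apply: ltn_trans i1.
  have := cl _ i1; have := cl _ i0.
  have E1 : phi (nth 0 s' i.+1) - phi (nth 0 s' i) =
    (derive1 hf (nth 0 s' i.+1) - derive1 hf (nth 0 s' i)) 0 0.
    rewrite good ?mem_nth ?sz // good ?mem_nth ?sz //.
    by rewrite [RHS]mxE [X in _ = _ + X]mxE.
  have := enorm_abs (derive1 hf (nth 0 s' i.+1) - derive1 hf (nth 0 s' i)).
  rewrite -E1 => h3 h1 h2.
  exact: tri4 h3 h1 h2.
rewrite big_split /= sumr_const card_ord /S' sz lerD2l.
have hm : (m.-1)%:R <= m%:R :> R by rewrite ler_nat leq_pred.
have epe : ep * (2 * m%:R + 1) = e by rewrite /ep divfK // gt_eqF.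
apply: (@le_trans _ _ (ep * (2 * m%:R + 1))); last by rewrite epe.
rewrite -mulrnA -[ep *+ _]mulr_natr; apply: ler_wpM2l; first exact: ltW.
rewrite natrM.
apply: (@le_trans _ _ (2 * m%:R)); last by rewrite lerDl.
by rewrite ler_wpM2l.
Qed.

Lemma Rreg_gz d' (f : 'rV[R]_d'.+1 -> 'rV[R]_d'.+1) z : admissible f ->
  (Rreg (gz f z) <= Rreg f)%E.
Proof.
move=> af; apply: ge_ereal_sup => _ [[w b] /= w1 <-].
rewrite hline_gz.
have w1' : enorm ((w 0 0) *: delta_mx 0 0 : 'rV[R]_d'.+1) = 1 by rewrite enorm_delta -enorm1.
have [_ ff] := af _ (emb d' z (b 0 0)) w1'.
apply: le_trans; first by apply: var_Pj; exact: ff.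
by apply: ereal_sup_ubound; exists ((w 0 0) *: delta_mx 0 0, emb d' z (b 0 0)).
Qed.

End Aux.

Theorem mainTheorem10 (R : realType) (n : nat) (D : R) :
  (2 <= n)%N -> 0 < D ->
  forall (d : nat) (t eps : R), (1 <= d)%N -> 0 < t -> 0 < eps ->
    (rstar n D t eps 1 <= rstar n D t eps d)%E.
Proof.
move=> n2 _ [//|d'] t eps _ t0 e0.
have n0 : (0 < n)%N by apply: leq_trans n2.
apply: le_ereal_inf_tmp => _ [f [af [bf lf]] <-].
have [z hz] : exists z, (Lloss n D t (gz f z) < eps%:E)%E.
  apply: contrapT => H.
  have := @loss_main R n D t eps d' f n0 t0 e0 (fun z hz => H (ex_intro _ z hz)).
  by rewrite leNgt lf.
apply: le_trans; last exact: (@Rreg_gz R d' f z af).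
apply: ereal_inf_lbound; exists (gz f z) => //; split; first exact: adm_gz.
by split; [exact: borel_gz|exact: hz].
Qed.
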